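(* Let $H$ be a separable complex Hilbert space and let $\mathcal{U}$ be a unitary system on $H$. If $\psi_1,\psi_2\in\mathcal{W}(\mathcal{U})$, then $\psi_1+\lambda\psi_2\in\mathcal{RW}(\mathcal{U})$ for every complex scalar $\lambda$ with $|\lambda|\neq 1$. More generally, if $\psi_1,\psi_2\in\mathcal{RW}(\mathcal{U})$, then there are constants $b>a>0$ such that $\psi_1+\lambda\psi_2\in\mathcal{RW}(\mathcal{U})$ for all $\lambda\in\mathbb{C}$ with either $|\lambda|<a$ or $|\lambda|>b$.
   Context: A unitary system on $H$ is a collection $\mathcal{U}$ of unitary operators on $H$ containing the identity operator. A vector $\psi\in H$ is a complete wandering vector for $\mathcal{U}$ if $\{U\psi: U\in\mathcal{U}\}$ is an orthonormal set whose closed linear span is $H$; $\mathcal{W}(\mathcal{U})$ denotes the set of complete wandering vectors. A Riesz basis of a Hilbert space is the image of an orthonormal basis under a bounded invertible operator. A vector $\psi$ is a complete Riesz vector for $\mathcal{U}$ if $\{U\psi:U\in\mathcal{U}\}$ is a Riesz basis for its closed linear span and this closed linear span is $H$; $\mathcal{RW}(\mathcal{U})$ denotes the set of complete Riesz vectors. *)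

(* Defs.v *)
From HB Require Import structures.
From mathcomp Require Import all_boot all_order all_algebra.
From mathcomp Require Import boolp classical_sets reals.
From mathcomp Require Export complex.

Set Implicit Arguments.
Unset Strict Implicit.
Unset Printing Implicit Defensive.

Import Order.TTheory GRing.Theory Num.Theory.
Local Open Scope ring_scope.

Section HilbertDefs.
Variable R : realType.
Local Notation C := R[i].
Variable H : lmodType C.
Variable ip : H -> H -> C.   (* inner product, linear in the first argument *)

Record inner_product : Prop := InnerProduct {
  ip_addl : forall x y z, ip (x + y) z = ip x z + ip y z;
  ip_scalel : forall (a : C) x y, ip (a *: x) y = a * ip x y;
  ip_conj : forall x y, ip y x = conjc (ip x y);
  ip_ge0 : forall x, 0 <= ip x x;
  ip_eq0 : forall x, ip x x = 0 -> x = 0 }.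

Definition hnorm (x : H) : R := Num.sqrt (complex.Re (ip x x)).

Definition cauchy_seq (u : nat -> H) : Prop :=
  forall eps : R, 0 < eps -> exists N : nat,
    forall m n, (N <= m)%N -> (N <= n)%N -> hnorm (u m - u n) < eps.

Definition converges_to (u : nat -> H) (l : H) : Prop :=
  forall eps : R, 0 < eps -> exists N : nat,
    forall n, (N <= n)%N -> hnorm (u n - l) < eps.

Definition hilbert_space : Prop :=
  inner_product /\ forall u, cauchy_seq u -> exists l, converges_to u l.

Definition separable : Prop :=
  exists d : nat -> H, forall (x : H) (eps : R), 0 < eps ->
    exists n, hnorm (x - d n) < eps.

Definition linear_op (T : H -> H) : Prop :=
  forall (a : C) x y, T (a *: x + y) = a *: T x + T y.

Definition bounded_op (T : H -> H) : Prop :=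
  exists M : R, forall x, hnorm (T x) <= M * hnorm x.

Definition bounded_invertible (T : H -> H) : Prop :=
  linear_op T /\ bounded_op T /\
  exists S : H -> H, linear_op S /\ bounded_op S /\ cancel T S /\ cancel S T.

Definition unitary (U : H -> H) : Prop :=
  linear_op U /\ (forall x y, ip (U x) (U y) = ip x y) /\
  (forall y, exists x, U x = y).

Definition unitary_system (US : set (H -> H)) : Prop :=
  (forall U, US U -> unitary U) /\ US id.

Definition orthonormal (I : Type) (f : I -> H) : Prop :=
  forall i j, ip (f i) (f j) = (if asbool (i = j) then 1 else 0).

Definition in_span (I : Type) (f : I -> H) (x : H) : Prop :=
  exists s : seq (C * I), x = \sum_(p <- s) p.1 *: f p.2.

(* the closed linear span of f is all of H *)
Definition complete_family (I : Type) (f : I -> H) : Prop :=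
  forall (x : H) (eps : R), 0 < eps ->
    exists y, in_span f y /\ hnorm (x - y) < eps.

Definition orthonormal_basis (I : Type) (f : I -> H) : Prop :=
  orthonormal f /\ complete_family f.

Definition riesz_basis (I : Type) (f : I -> H) : Prop :=
  exists e : I -> H, orthonormal_basis e /\
    exists T : H -> H, bounded_invertible T /\ forall i, T (e i) = f i.

Definition uorbit (US : set (H -> H)) (psi : H) : {U : H -> H | US U} -> H :=
  fun u => proj1_sig u psi.

Definition wandering (US : set (H -> H)) (psi : H) : Prop :=
  orthonormal (@uorbit US psi) /\ complete_family (@uorbit US psi).

(* complete Riesz vectors RW(US): the uorbit is a Riesz basis of its closed
   linear span, and that closed linear span is H *)
Definition riesz_vector (US : set (H -> H)) (psi : H) : Prop :=
  complete_family (@uorbit US psi) /\ riesz_basis (@uorbit US psi).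

End HilbertDefs.

(* Main.v *)
Require Import Defs.
From HB Require Import structures.
From mathcomp Require Import all_boot all_order all_algebra.
From mathcomp Require Import boolp classical_sets reals complex.
From mathcomp Require Import ring lra.
Import Order.TTheory GRing.Theory Num.Theory.
Local Open Scope ring_scope.
Local Open Scope complex_scope.
Set Implicit Arguments.
Unset Strict Implicit.
Unset Printing Implicit Defensive.

Section A.
Variable R : realType.
Local Notation C := R[i].
Variable H : lmodType C.
Variable ip : H -> H -> C.
Hypothesis hip : inner_product ip.
Local Notation hnorm := (hnorm ip).

Lemma normcE' (z : C) : `|z| = (Normc.normc z)%:C.
Proof. by case: z. Qed.

Lemma normc_ge0 (z : C) : 0 <= Normc.normc z.
Proof. by case: z => a b /=; rewrite sqrtr_ge0. Qed.

Lemma ipDl x y z : ip (x + y) z = ip x z + ip y z.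
Proof. exact: (ip_addl hip). Qed.
Lemma ipZl a x y : ip (a *: x) y = a * ip x y.
Proof. exact: (ip_scalel hip). Qed.
Lemma ip0l y : ip 0 y = 0.
Proof. by rewrite -(scale0r 0) ipZl mul0r. Qed.
Lemma ipNl x y : ip (- x) y = - ip x y.
Proof. by rewrite -scaleN1r ipZl mulN1r. Qed.
Lemma ipBl x y z : ip (x - y) z = ip x z - ip y z.
Proof. by rewrite ipDl ipNl. Qed.
Lemma ipDr x y z : ip x (y + z) = ip x y + ip x z.
Proof. by rewrite (ip_conj hip) ipDl rmorphD /= -!(ip_conj hip). Qed.
Lemma ipZr a x y : ip x (a *: y) = conjc a * ip x y.
Proof. by rewrite (ip_conj hip) ipZl rmorphM /= -!(ip_conj hip). Qed.
Lemma ip0r y : ip y 0 = 0.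
Proof. by rewrite (ip_conj hip) ip0l conjc0. Qed.
Lemma ipNr x y : ip x (- y) = - ip x y.
Proof. by rewrite -scaleN1r ipZr rmorphN1 mulN1r. Qed.
Lemma ipBr x y z : ip x (y - z) = ip x y - ip x z.
Proof. by rewrite ipDr ipNr. Qed.

Lemma ipxx x : ip x x = (hnorm x ^+ 2)%:C.
Proof.
have h := ip_ge0 hip x.
rewrite /Defs.hnorm.
move: h; case: (ip x x) => a b; rewrite lecE /= => /andP[/eqP -> ha].
by rewrite sqr_sqrtr.
Qed.

Lemma hnorm_ge0 x : 0 <= hnorm x.
Proof. exact: sqrtr_ge0. Qed.

Lemma hnorm_eq0 x : hnorm x = 0 -> x = 0.
Proof. by move=> h; apply: (ip_eq0 hip); rewrite ipxx h expr0n. Qed.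

Lemma hnorm0 : hnorm 0 = 0.
Proof. by rewrite /Defs.hnorm ip0l /= sqrtr0. Qed.

Lemma mulcJ_norm (a : C) : a * conjc a = (Normc.normc a ^+ 2)%:C.
Proof.
case: a => a b /=; rewrite sqr_sqrtr ?addr_ge0 ?sqr_ge0 //.
by simpc; rewrite !expr2 mulrC [b * a]mulrC addNr.
Qed.

Lemma hnormZ a x : hnorm (a *: x) = Normc.normc a * hnorm x.
Proof.
apply/eqP; rewrite -(@eqrXn2 _ 2) //; last by rewrite mulr_ge0 ?normc_ge0 ?hnorm_ge0.
  rewrite -(inj_eq (@complexI _)) -ipxx ipZl ipZr mulrA exprMn rmorphM /= -ipxx.
  by rewrite mulcJ_norm.
exact: hnorm_ge0.
Qed.

Lemma normcN1 : Normc.normc (-1 : C) = 1.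
Proof. by rewrite /= oppr0 expr0n /= addr0 sqrrN expr1n sqrtr1. Qed.

Lemma hnormN x : hnorm (- x) = hnorm x.
Proof. by rewrite -scaleN1r hnormZ normcN1 mul1r. Qed.

Lemma hnormB x y : hnorm (x - y) = hnorm (y - x).
Proof. by rewrite -hnormN opprB. Qed.

Lemma CS x y : Normc.normc (ip x y) <= hnorm x * hnorm y.
Proof.
have [y0|ny0] := eqVneq (hnorm y) 0.
  by rewrite (hnorm_eq0 y0) ip0r Normc.normc0 hnorm0 mulr0.
have npos : 0 < hnorm y by rewrite lt_def ny0 hnorm_ge0.
set z := ip x y; set n := hnorm y.
set t := z / (n ^+ 2)%:C.
have key : (hnorm (x - t *: y) ^+ 2)%:C =
    ((hnorm x ^+ 2) - Normc.normc z ^+ 2 / n ^+ 2)%:C.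
  have cj : conjc t = conjc z / (n ^+ 2)%:C.
    by rewrite /t rmorphM fmorphV; congr (_ / _); exact: conjc_real.
  rewrite -ipxx ipBl !ipBr ipZl ipZr ipZl ipZr ipxx -/n -/z (ip_conj hip x y) -/z ipxx -/n cj.
  have nC : (n ^+ 2)%:C != 0 by rewrite (inj_eq (@complexI _)) expf_neq0.
  have e2 : (Normc.normc z ^+ 2 / n ^+ 2)%:C = z * conjc z / (n ^+ 2)%:C.
    by rewrite mulcJ_norm rmorphM fmorphV.
  rewrite /t rmorphB /= e2.
  field. by rewrite (inj_eq (@complexI _)).
have : 0 <= hnorm x ^+ 2 - Normc.normc z ^+ 2 / n ^+ 2.
  by rewrite -ler0c -key ler0c sqr_ge0.
rewrite subr_ge0 ler_pdivrMr ?exprn_gt0 // -exprMn.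
by rewrite ler_pXn2r ?nnegrE ?mulr_ge0 ?normc_ge0 ?hnorm_ge0.
Qed.

Lemma Re_le_normc (z : C) : complex.Re z <= Normc.normc z.
Proof.
case: z => a b /=.
have h : a <= `|a| by rewrite ler_norm.
apply: (le_trans h); rewrite -sqrtr_sqr ler_sqrt ?addr_ge0 ?sqr_ge0 //.
by rewrite lerDl sqr_ge0.
Qed.

Lemma hnormD x y : hnorm (x + y) <= hnorm x + hnorm y.
Proof.
rewrite -(@ler_pXn2r _ 2) ?nnegrE ?addr_ge0 ?hnorm_ge0 //.
have e : (hnorm (x + y) ^+ 2)%:C = (hnorm x ^+ 2)%:C + (hnorm y ^+ 2)%:C + 2%:R * (complex.Re (ip x y))%:C.
  rewrite -!ipxx ipDl !ipDr (ip_conj hip x y) -addcJ.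
  by rewrite addrA [_ + ip y y]addrC -!addrA [ip y y + _]addrC -!addrA.
have e' : hnorm (x + y) ^+ 2 = hnorm x ^+ 2 + hnorm y ^+ 2 + 2 * complex.Re (ip x y).
  have := congr1 (@complex.Re R) e; rewrite /= => ->; ring.
rewrite e' sqrrD -addrA [hnorm y ^+ 2 + _]addrC addrA lerD2r lerD2l.
rewrite -[in X in _ <= X]mulr_natl; apply: ler_wpM2l; first by rewrite ler0n.
by apply: le_trans (Re_le_normc _) (CS _ _).
Qed.


Definition null (r : nat -> R) := forall eps : R, 0 < eps -> exists N : nat,
  forall n, (N <= n)%N -> r n < eps.

Lemma null_add r1 r2 : null r1 -> null r2 -> null (fun n => r1 n + r2 n).
Proof.
move=> h1 h2 e e0.
have e2 : 0 < e / 2 by rewrite divr_gt0.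
have [N1 H1] := h1 _ e2; have [N2 H2] := h2 _ e2.
exists (maxn N1 N2) => n; rewrite geq_max => /andP[n1 n2].
by rewrite [e]splitr ltrD ?H1 ?H2.
Qed.

Lemma null_scale c r : 0 <= c -> null r -> null (fun n => c * r n).
Proof.
move=> c0 h e e0.
have c1 : 0 < c + 1 by rewrite ltr_wpDl.
have [N HN] := h (e / (c + 1)) (divr_gt0 e0 c1).
exists N => n /HN hn.
apply: (@le_lt_trans _ _ (c * (e / (c + 1)))); first by rewrite ler_wpM2l // ltW.
rewrite mulrA ltr_pdivrMr //; nra.
Qed.

Lemma null_le r r' : (forall n, r n <= r' n) -> null r' -> null r.
Proof.
move=> h h' e e0; have [N HN] := h' e e0; exists N => n /HN.
exact: le_lt_trans.
Qed.

Lemma null_inv : null (fun n => (n.+1%:R)^-1).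
Proof.
move=> e e0.
have ei : 0 <= e^-1 by rewrite invr_ge0 ltW.
exists (Num.Def.archi_bound e^-1) => n hn.
have h1 := archi_boundP ei.
have h2 : e^-1 < n.+1%:R.
  apply: (lt_le_trans h1); rewrite ler_nat; exact: leqW.
by rewrite -(invrK e) ltf_pV2 ?posrE ?invr_gt0 ?ltr0Sn.
Qed.

Lemma le_eps (a c : R) : (forall eps, 0 < eps -> a < c + eps) -> a <= c.
Proof. by move=> h; apply/ler_addgt0Pr => e e0; exact/ltW/h. Qed.

Lemma hnorm_dist x y z : hnorm (x - z) <= hnorm (x - y) + hnorm (y - z).
Proof.
have -> : x - z = (x - y) + (y - z) by rewrite addrA subrK.
exact: hnormD.
Qed.

Lemma small0 z : (forall eps, 0 < eps -> hnorm z < eps) -> z = 0.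
Proof.
move=> h; apply: hnorm_eq0; apply/eqP; rewrite eq_le hnorm_ge0 andbT.
by apply: le_eps => e /h; rewrite add0r.
Qed.

Local Notation converges_to := (converges_to ip).
Local Notation cauchy_seq := (cauchy_seq ip).

Lemma conv_unique u l l' : converges_to u l -> converges_to u l' -> l = l'.
Proof.
move=> h1 h2; apply/eqP; rewrite -subr_eq0; apply/eqP/small0 => e e0.
have [N HN] := null_add h1 h2 e0.
apply: le_lt_trans (HN N (leqnn N)).
by rewrite (hnormB (u N) l); apply: hnorm_dist.
Qed.

Lemma conv_null u l r : null r -> (forall n, hnorm (u n - l) <= r n) ->
  converges_to u l.
Proof. by move=> hr h; apply: null_le hr. Qed.

Lemma conv_cauchy u l : converges_to u l -> cauchy_seq u.
Proof.
move=> h e e0.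
have e2 : 0 < e / 2 by rewrite divr_gt0.
have [N HN] := h _ e2; exists N => m n hm hn.
apply: le_lt_trans (hnorm_dist _ (l) _) _.
by rewrite [e]splitr ltrD ?HN // hnormB HN.
Qed.

Lemma conv_norm_le u l c : converges_to u l -> (forall n, hnorm (u n) <= c) ->
  hnorm l <= c.
Proof.
move=> h hc; apply: le_eps => e e0.
have [N HN] := h _ e0.
have := hnorm_dist l (u N) 0; rewrite !subr0 => h1.
apply: le_lt_trans h1 _.
by rewrite hnormB addrC; apply: ler_ltD; [exact: hc | exact: HN].
Qed.

Lemma conv_const x : converges_to (fun=> x) x.
Proof. by move=> e e0; exists 0%N => n _; rewrite subrr hnorm0. Qed.


Section Lin.
Variable T : H -> H.
Hypothesis hT : linear_op T.
Lemma lin0 : T 0 = 0.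
Proof.
have h := hT 1 0 0; rewrite !scale1r addr0 in h.
by apply: (@addrI _ (T 0)); rewrite -h addr0.
Qed.
Lemma linD x y : T (x + y) = T x + T y.
Proof. by have := hT 1 x y; rewrite !scale1r. Qed.
Lemma linZ a x : T (a *: x) = a *: T x.
Proof. by have := hT a x 0; rewrite !addr0 lin0 addr0. Qed.
Lemma linN x : T (- x) = - T x.
Proof. by rewrite -scaleN1r linZ scaleN1r. Qed.
Lemma linB x y : T (x - y) = T x - T y.
Proof. by rewrite linD linN. Qed.
End Lin.

Variable I : Type.
Definition lc (s : seq (C * I)) (e : I -> H) : H := \sum_(p <- s) p.1 *: e p.2.

Lemma lc_cat s t e : lc (s ++ t) e = lc s e + lc t e.
Proof. by rewrite /lc big_cat. Qed.

Definition sc (a : C) (s : seq (C * I)) := [seq (a * p.1, p.2) | p <- s].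

Lemma lc_sc a s e : lc (sc a s) e = a *: lc s e.
Proof.
rewrite /lc /sc big_map scaler_sumr; apply: eq_bigr => p _.
by rewrite scalerA.
Qed.

Lemma lc_sub s t e : lc s e - lc t e = lc (s ++ sc (-1) t) e.
Proof. by rewrite lc_cat lc_sc scaleN1r. Qed.

Lemma lin_lc T s e : linear_op T -> T (lc s e) = lc s (fun i => T (e i)).
Proof.
move=> hT; elim: s => [|p s IH]; first by rewrite /lc !big_nil lin0.
by rewrite /lc in IH *; rewrite !big_cons linD // linZ // IH.
Qed.

Lemma ip_lcl s e y : ip (lc s e) y = \sum_(p <- s) p.1 * ip (e p.2) y.
Proof.
elim: s => [|p s IH]; first by rewrite /lc !big_nil ip0l.
by rewrite /lc in IH *; rewrite !big_cons ipDl ipZl IH.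
Qed.

Lemma ip_lcr s e y : ip y (lc s e) = \sum_(p <- s) conjc p.1 * ip y (e p.2).
Proof.
elim: s => [|p s IH]; first by rewrite /lc !big_nil ip0r.
by rewrite /lc in IH *; rewrite !big_cons ipDr ipZr IH.
Qed.

Lemma gram_eq (e f : I -> H) s t : Defs.orthonormal ip e -> Defs.orthonormal ip f ->
  ip (lc s e) (lc t e) = ip (lc s f) (lc t f).
Proof.
move=> oe of_; rewrite !ip_lcl; apply: eq_bigr => p _; rewrite !ip_lcr.
congr (_ * _); apply: eq_bigr => q _; by rewrite oe of_.
Qed.

Lemma hnorm_lc_eq (e f : I -> H) s : Defs.orthonormal ip e -> Defs.orthonormal ip f ->
  hnorm (lc s e) = hnorm (lc s f).
Proof. by move=> oe of_; rewrite /Defs.hnorm (gram_eq s s oe of_). Qed.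

Lemma hnorm_lc_diff (e f : I -> H) s t : Defs.orthonormal ip e -> Defs.orthonormal ip f ->
  hnorm (lc s e - lc t e) = hnorm (lc s f - lc t f).
Proof. by move=> oe of_; rewrite !lc_sub (hnorm_lc_eq _ oe of_). Qed.


Lemma conv_lin a u l v m : converges_to u l -> converges_to v m ->
  converges_to (fun n => a *: u n + v n) (a *: l + m).
Proof.
move=> hu hv.
apply: (@conv_null _ _ (fun n => Normc.normc a * hnorm (u n - l) + hnorm (v n - m))).
  by apply: null_add => //; apply: null_scale => //; exact: normc_ge0.
move=> n.
have -> : a *: u n + v n - (a *: l + m) = a *: (u n - l) + (v n - m).
  by rewrite scalerBr opprD addrACA.
by apply: le_trans (hnormD _ _) _; rewrite hnormZ.
Qed.

Lemma conv_norm_le2 u l v m : converges_to u l -> converges_to v m ->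
  (forall n, hnorm (u n) <= hnorm (v n)) -> hnorm l <= hnorm m.
Proof.
move=> hu hv h; apply: le_eps => e e0.
have [N HN] := null_add hu hv e0.
have := HN N (leqnn N) => hN.
have h1 : hnorm l <= hnorm (u N - l) + hnorm (u N).
  by have := hnorm_dist l (u N) 0; rewrite !subr0 hnormB addrC.
have h2 : hnorm (v N) <= hnorm (v N - m) + hnorm m.
  by have := hnorm_dist (v N) m 0; rewrite !subr0.
apply: le_lt_trans h1 _; apply: le_lt_trans (lerD (lexx _) (le_trans (h N) h2)) _.
by rewrite addrA addrC ltrD2l.
Qed.

Lemma lc1 (g : I -> H) i : lc [:: (1, i)] g = g i.
Proof. by rewrite /lc big_cons big_nil scale1r addr0. Qed.

Hypothesis hcomp : forall u, cauchy_seq u -> exists l, converges_to u l.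

Section Ext.
Variables e f : I -> H.
Hypothesis oe : Defs.orthonormal ip e.
Hypothesis ce : complete_family ip e.
Hypothesis of_ : Defs.orthonormal ip f.

Lemma ex_appr x n : exists s, hnorm (x - lc s e) < (n.+1%:R)^-1.
Proof.
have p : 0 < (n.+1%:R)^-1 :> R by rewrite invr_gt0 ltr0Sn.
have [y [[s ->] hy]] := ce x p.
by exists s.
Qed.

Definition appr x n := proj1_sig (cid (ex_appr x n)).

Lemma appr_conv x : converges_to (fun n => lc (appr x n) e) x.
Proof.
apply: (conv_null null_inv) => n; rewrite hnormB.
exact: ltW (proj2_sig (cid (ex_appr x n))).
Qed.

Lemma ex_W x : exists l, converges_to (fun n => lc (appr x n) f) l.
Proof.
apply: hcomp => eps e0.
have [N HN] := conv_cauchy (appr_conv x) e0.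
by exists N => m n hm hn; rewrite -(hnorm_lc_diff _ _ oe of_); apply: HN.
Qed.

Definition W x := proj1_sig (cid (ex_W x)).

Lemma W_conv x : converges_to (fun n => lc (appr x n) f) (W x).
Proof. exact: (proj2_sig (cid (ex_W x))). Qed.

Lemma W_spec x t : converges_to (fun n => lc (t n) e) x ->
  converges_to (fun n => lc (t n) f) (W x).
Proof.
move=> ht.
apply: (@conv_null _ _ (fun n => hnorm (lc (t n) e - x) + hnorm (lc (appr x n) e - x)
   + hnorm (lc (appr x n) f - W x))).
  by apply: null_add; [apply: null_add => //; exact: appr_conv | exact: W_conv].
move=> n; apply: le_trans (hnorm_dist _ (lc (appr x n) f) _) _.
rewrite lerD2r -(hnorm_lc_diff _ _ oe of_).
by apply: le_trans (hnorm_dist _ x _) _; rewrite (hnormB x).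
Qed.

Lemma W_e i : W (e i) = f i.
Proof.
have h1 := W_spec (t := fun=> [:: (1, i)]) (x := e i).
rewrite lc1 in h1.
have h2 := h1 (conv_const _).
apply: (conv_unique h2); rewrite lc1; exact: conv_const.
Qed.

Lemma W_lin : linear_op W.
Proof.
move=> a x y.
set t := fun n => sc a (appr x n) ++ appr y n.
have ht : converges_to (fun n => lc (t n) e) (a *: x + y).
  have := conv_lin a (appr_conv x) (appr_conv y).
  by congr converges_to; apply: funext => n; rewrite /t lc_cat lc_sc.
have h1 := W_spec ht.
have h2 : converges_to (fun n => lc (t n) f) (a *: W x + W y).
  have := conv_lin a (W_conv x) (W_conv y).
  by congr converges_to; apply: funext => n; rewrite /t lc_cat lc_sc.
exact: conv_unique h1 h2.
Qed.

Lemma W_bound x : hnorm (W x) <= hnorm x.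
Proof.
apply: (conv_norm_le2 (W_conv x) (appr_conv x)) => n.
by rewrite (hnorm_lc_eq _ oe of_).
Qed.

End Ext.

Lemma conv_shift u l : converges_to u l -> converges_to (fun n => u n.+1) l.
Proof. by move=> h e e0; have [N HN] := h e e0; exists N => n hn; apply: HN; exact: leqW. Qed.

Lemma lin_inj T c : linear_op T -> 0 < c -> (forall x, c * hnorm x <= hnorm (T x)) ->
  injective T.
Proof.
move=> hT c0 hc x y hxy; apply/eqP; rewrite -subr_eq0; apply/eqP/hnorm_eq0.
have := hc (x - y); rewrite linB // hxy subrr hnorm0 => h.
apply/eqP; rewrite eq_le hnorm_ge0 andbT.
by rewrite -(pmulr_rle0 _ c0).
Qed.

Lemma mk_binv T M c : linear_op T -> (forall x, hnorm (T x) <= M * hnorm x) ->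
  0 < c -> (forall x, c * hnorm x <= hnorm (T x)) -> (forall y, exists x, T x = y) ->
  bounded_invertible ip T.
Proof.
move=> hT hM c0 hc hs.
have inj := lin_inj hT c0 hc.
pose S y := proj1_sig (cid (hs y)).
have TS : cancel S T by move=> y; exact: (proj2_sig (cid (hs y))).
have ST : cancel T S by move=> x; apply: inj; rewrite TS.
split => //; split; first by exists M.
exists S; split.
  by move=> a x y; apply: inj; rewrite hT !TS.
split => //; exists c^-1 => y.
rewrite ler_pdivlMl // -{2}(TS y); exact: hc.
Qed.

Section Neumann.
Variable D : H -> H.
Hypothesis hDl : linear_op D.
Variable q : R.
Hypothesis q0 : 0 <= q.
Hypothesis q1 : q < 1.
Hypothesis hD : forall x, hnorm (D x) <= q * hnorm x.

Lemma bern n : q ^+ n * (n.+1%:R * (1 - q)) <= 1.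
Proof.
elim: n => [|n IH]; first by rewrite expr0 mul1r mul1r lerBlDr lerDl.
have P0 : 0 <= q ^+ n by rewrite exprn_ge0.
have P1 : q ^+ n <= 1 by apply: exprn_ile1 => //; exact: ltW.
rewrite exprS -[n.+2]addn1 natrD.
set m := n.+1%:R in IH *; set P := q ^+ n in IH P0 P1 *.
have h1 : 0 <= q * (1 - P * (m * (1 - q))) by rewrite mulr_ge0 // subr_ge0.
have h2 : 0 <= (1 - q) * (1 - q * P).
  rewrite mulr_ge0 // ?subr_ge0 ?ltW //.
  by apply: le_lt_trans (ler_wpM2l q0 P1) _; rewrite mulr1.
nra.
Qed.

Lemma null_geo : null (fun n => q ^+ n).
Proof.
have q1' : 0 < 1 - q by rewrite subr_gt0.
apply: (@null_le _ (fun n => (1 - q)^-1 * (n.+1%:R)^-1)); last first.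
  by apply: null_scale; [rewrite invr_ge0 ltW | exact: null_inv].
move=> n; rewrite -invfM -[X in _ <= X]mul1r ler_pdivlMr; last by rewrite mulr_gt0.
by rewrite [_ * n.+1%:R]mulrC bern.
Qed.

Variable y : H.
Definition xs n := iter n (fun z => y - D z) 0.

Lemma xs_bound n : hnorm (xs n) <= hnorm y / (1 - q).
Proof.
have q1' : 0 < 1 - q by rewrite subr_gt0.
elim: n => [|n IH] /=; first by rewrite hnorm0 divr_ge0 ?hnorm_ge0 ?ltW.
apply: le_trans (hnormD _ _) _; rewrite hnormN.
apply: le_trans (lerD (lexx _) (le_trans (hD _) (ler_wpM2l q0 IH))) _.
rewrite ler_pdivlMr //.
have hy := hnorm_ge0 y.
have nq : 1 - q != 0 by rewrite subr_eq0 eq_sym (lt_eqF q1).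
rewrite mulrDl -mulrA divfK //; nra.
Qed.

Lemma xs_contr k n : hnorm (xs (n + k) - xs n) <= q ^+ n * (hnorm y / (1 - q)).
Proof.
elim: n => [|n IH]; first by rewrite add0n expr0 mul1r /= subr0 xs_bound.
rewrite addSn /=.
have -> : y - D (xs (n + k)) - (y - D (xs n)) = D (xs n) - D (xs (n + k)) by rewrite opprB addrC addrA subrK.
rewrite -linB // exprS -mulrA.
apply: le_trans (hD _) _; rewrite hnormB; exact: ler_wpM2l q0 _ _ IH.
Qed.

Lemma xs_cauchy : cauchy_seq xs.
Proof.
move=> e e0.
have c0 : 0 <= hnorm y / (1 - q) by rewrite divr_ge0 ?hnorm_ge0 // subr_ge0 ltW.
have [N HN] := null_scale c0 null_geo e0.
exists N => m n hm hn.
have [le_nm|le_mn] := leqP n m.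
  rewrite -(subnKC le_nm); apply: le_lt_trans (xs_contr _ _) _.
  by rewrite mulrC; apply: HN.
rewrite hnormB -(subnKC (ltnW le_mn)); apply: le_lt_trans (xs_contr _ _) _.
by rewrite mulrC; apply: HN.
Qed.

Lemma neumann_surj : exists x, x + D x = y.
Proof.
have [x hx] := hcomp xs_cauchy.
exists x.
have hDx : converges_to (fun n => D (xs n)) (D x).
  apply: (@conv_null _ _ (fun n => q * hnorm (xs n - x))).
    exact: null_scale.
  by move=> n; rewrite -linB //.
have h1 := conv_lin (-1) hDx (conv_const y).
have h2 : converges_to (fun n => (-1) *: D (xs n) + y) x.
  have := conv_shift hx; congr converges_to; apply: funext => n.
  by rewrite /= scaleN1r addrC.
have e := conv_unique h2 h1; rewrite scaleN1r in e.
by rewrite {1}e addrAC addNr add0r.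
Qed.

End Neumann.

Lemma neumann D q : linear_op D -> 0 <= q -> q < 1 ->
  (forall x, hnorm (D x) <= q * hnorm x) -> bounded_invertible ip (fun x => x + D x).
Proof.
move=> hDl q0 q1 hD.
apply: (@mk_binv _ (1 + q) (1 - q)).
- by move=> a x y; rewrite hDl scalerDr addrACA.
- move=> x; apply: le_trans (hnormD _ _) _; rewrite mulrDl mul1r lerD2l; exact: hD.
- by rewrite subr_gt0.
- move=> x; rewrite mulrBl mul1r lerBlDr.
  have := hnorm_dist x (x + D x) 0; rewrite !subr0 opprD addrA subrr add0r hnormN.
  move=> h; apply: le_trans h _; rewrite addrC lerD2l; exact: hD.
- move=> y; exact: (neumann_surj hDl q0 q1 hD y).
Qed.

Lemma bounded_pos (T : H -> H) : bounded_op ip T ->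
  exists M, 0 <= M /\ forall x, hnorm (T x) <= M * hnorm x.
Proof.
move=> [M hM]; exists `|M|; split => // x.
apply: le_trans (hM x) _; apply: ler_wpM2r; [exact: hnorm_ge0 | exact: ler_norm].
Qed.

Lemma bounded_comp (T1 T2 : H -> H) : bounded_op ip T1 -> bounded_op ip T2 ->
  bounded_op ip (fun x => T1 (T2 x)).
Proof.
move=> /bounded_pos [M1 [M10 h1]] /bounded_pos [M2 [M20 h2]].
exists (M1 * M2) => x; apply: le_trans (h1 _) _; rewrite -mulrA.
exact: ler_wpM2l M10 _ _ (h2 x).
Qed.

Lemma linear_comp (T1 T2 : H -> H) : linear_op T1 -> linear_op T2 -> linear_op (fun x => T1 (T2 x)).
Proof. by move=> l1 l2 a x y; rewrite l2 l1. Qed.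

Lemma binv_comp (T1 T2 : H -> H) : bounded_invertible ip T1 -> bounded_invertible ip T2 ->
  bounded_invertible ip (fun x => T1 (T2 x)).
Proof.
move=> [l1 [b1 [S1 [ls1 [bs1 [c1 c1']]]]]] [l2 [b2 [S2 [ls2 [bs2 [c2 c2']]]]]].
split; first exact: linear_comp.
split; first exact: bounded_comp.
exists (fun y => S2 (S1 y)); split; first exact: linear_comp.
split; first exact: bounded_comp.
by split => x /=; [rewrite c1 c2 | rewrite c2' c1'].
Qed.

Lemma transfer_complete (e g : I -> H) (T : H -> H) : complete_family ip e ->
  bounded_invertible ip T -> (forall i, T (e i) = g i) -> complete_family ip g.
Proof.
move=> ce [lT [bT [S [_ [_ [_ TS]]]]]] hg x eps e0.
have [M [M0 hM]] := bounded_pos bT.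
have M1 : 0 < M + 1 by rewrite ltr_wpDl.
have [y [[s ->] hy]] := ce (S x) (eps / (M + 1)) (divr_gt0 e0 M1).
exists (lc s g); split; first by exists s.
have -> : lc s g = T (lc s e).
  by rewrite lin_lc //; apply: eq_bigr => p _; rewrite hg.
rewrite -{1}(TS x) -linB //; apply: le_lt_trans (hM _) _.
apply: (@le_lt_trans _ _ (M * (eps / (M + 1)))).
  exact: ler_wpM2l M0 _ _ (ltW hy).
rewrite mulrA ltr_pdivrMr //; nra.
Qed.

Lemma main_riesz (e g h : I -> H) (T1 S1 : H -> H) (K : R) (A : H -> H) (M : R) (lam : C) :
  orthonormal_basis ip e -> linear_op T1 -> bounded_op ip T1 -> linear_op S1 ->
  0 <= K -> (forall x, hnorm (S1 x) <= K * hnorm x) -> cancel T1 S1 -> cancel S1 T1 ->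
  (forall i, T1 (e i) = g i) ->
  linear_op A -> 0 <= M -> (forall x, hnorm (A x) <= M * hnorm x) ->
  (forall i, A (e i) = h i) ->
  Normc.normc lam * (K * M) < 1 ->
  complete_family ip (fun i => g i + lam *: h i) /\
  riesz_basis ip (fun i => g i + lam *: h i).
Proof.
move=> [oe ce] lT bT lS K0 hS c1 c2 hg lA M0 hA he hl.
pose D x := lam *: S1 (A x).
have lD : linear_op D.
  by move=> a x y; rewrite /D lA lS scalerDr !scalerA mulrC.
have q0 : 0 <= Normc.normc lam * (K * M) by rewrite !mulr_ge0 ?normc_ge0.
have hD : forall x, hnorm (D x) <= Normc.normc lam * (K * M) * hnorm x.
  move=> x; rewrite /D hnormZ -!mulrA; apply: ler_wpM2l; first exact: normc_ge0.
  apply: le_trans (hS _) _; apply: ler_wpM2l K0 _ _ _; exact: hA.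
have N := neumann lD q0 hl hD.
have B1 : bounded_invertible ip T1.
  split => //; split => //; exists S1; split => //; split => //; first by exists K.
have BT := binv_comp B1 N.
have hT : forall i, T1 (e i + D (e i)) = g i + lam *: h i.
  by move=> i; rewrite linD // linZ // /D he c2 hg.
split; first exact: transfer_complete ce BT hT.
exists e; split; first by split.
by exists (fun x => T1 (x + D x)).
Qed.
End A.

Section Final.
Variable R : realType.
Variable H : lmodType R[i].
Variable ip : H -> H -> R[i].
Hypothesis hip : inner_product ip.
Hypothesis hcomp : forall u, cauchy_seq ip u -> exists l, converges_to ip u l.
Variable US : set (H -> H).
Hypothesis hUS : unitary_system ip US.

Lemma orbit_lin psi1 psi2 (lam : R[i]) : @uorbit R H US (psi1 + lam *: psi2) =
  (fun i => @uorbit R H US psi1 i + lam *: @uorbit R H US psi2 i).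
Proof.
apply: funext => -[U hU]; rewrite /uorbit /=.
have [lU _] := hUS.1 U hU.
by rewrite linD // linZ.
Qed.

Lemma orbit_scale psi (c : R[i]) : @uorbit R H US (c *: psi) = (fun i => c *: @uorbit R H US psi i).
Proof.
apply: funext => -[U hU]; rewrite /uorbit /=.
have [lU _] := hUS.1 U hU.
by rewrite linZ.
Qed.

Lemma scale_binv (c : R[i]) : c != 0 -> bounded_invertible ip (fun x => c *: x).
Proof.
move=> c0; split.
  by move=> a x y; rewrite scalerDr !scalerA mulrC.
split; first by exists (Normc.normc c) => x; rewrite (hnormZ hip).
exists (fun x => c^-1 *: x); split.
  by move=> a x y; rewrite scalerDr !scalerA mulrC.
split; first by exists (Normc.normc c^-1) => x; rewrite (hnormZ hip).
by split => x; rewrite scalerA ?mulVf ?mulfV // scale1r.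
Qed.

Lemma riesz_scale psi (c : R[i]) : c != 0 -> riesz_vector ip US psi ->
  riesz_vector ip US (c *: psi).
Proof.
move=> c0 [cp [e [oe [T [bT hT]]]]].
rewrite /riesz_vector orbit_scale.
have Bc := scale_binv c0.
split; first exact: (transfer_complete cp Bc).
exists e; split => //.
exists (fun x => c *: T x); split; first exact: (binv_comp Bc bT).
by move=> i; rewrite hT.
Qed.

Lemma part1_small psi1 psi2 (lam : R[i]) :
  wandering ip US psi1 -> wandering ip US psi2 -> Normc.normc lam < 1 ->
  riesz_vector ip US (psi1 + lam *: psi2).
Proof.
move=> [oe ce] [of_ cf] hl.
rewrite /riesz_vector orbit_lin.
have lid : linear_op (@id H) by [].
have bid : bounded_op ip (@id H) by exists 1 => x; rewrite mul1r.
have hid : forall x, hnorm ip (id x) <= 1 * hnorm ip x by move=> x; rewrite mul1r.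
have hW : forall x, hnorm ip (W hip hcomp oe ce of_ x) <= 1 * hnorm ip x.
  by move=> x; rewrite mul1r; apply: W_bound.
have hl' : Normc.normc lam * (1 * 1) < 1 by rewrite !mulr1.
exact: (@main_riesz _ _ _ hip _ hcomp (@uorbit R H US psi1) _ _ id id 1
   (W hip hcomp oe ce of_) 1 lam (conj oe ce) lid bid lid ler01 hid (fun _ => erefl)
   (fun _ => erefl) (fun _ => erefl) (W_lin _ _ _ _ _) ler01 hW (W_e _ _ _ _ _) hl').
Qed.

Lemma part2_aux psi1 psi2 : riesz_vector ip US psi1 -> riesz_vector ip US psi2 ->
  exists c : R, 0 < c /\ forall lam : R[i], Normc.normc lam * c < 1 ->
  riesz_vector ip US (psi1 + lam *: psi2).
Proof.
move=> [cp1 [e [[oe ce] [T1 [[l1 [b1 [S1 [ls1 [bs1 [c1 c1']]]]]] he]]]]].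
move=> [cp2 [e' [[oe' ce'] [T2 [[l2 [b2 _]] he']]]]].
have [K [K0 hK]] := bounded_pos bs1.
have [M [M0 hM]] := bounded_pos b2.
have c0 : 0 < K * M + 1 by rewrite ltr_wpDl ?mulr_ge0.
exists (K * M + 1); split => // lam hl.
rewrite /riesz_vector orbit_lin.
apply: (@main_riesz _ _ _ hip _ hcomp e _ _ T1 S1 K
   (fun x => T2 (W hip hcomp oe ce oe' x)) M lam) => //.
- exact: linear_comp l2 (W_lin _ _ _ _ _).
- move=> x; apply: le_trans (hM _) _; apply: ler_wpM2l M0 _ _ _; exact: W_bound.
- by move=> i; rewrite W_e.
- apply: le_lt_trans hl; apply: ler_wpM2l; first exact: normc_ge0.
  by rewrite lerDl.
Qed.

End Final.

Local Close Scope complex_scope.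
Unset Implicit Arguments.

Theorem proposition3 (R : realType) (H : lmodType R[i]) (ip : H -> H -> R[i])
  (hH : hilbert_space ip) (hsep : separable ip)
  (US : set (H -> H)) (hUS : unitary_system ip US) :
  (forall psi1 psi2 : H,
     wandering ip US psi1 -> wandering ip US psi2 ->
     forall lam : R[i], Normc.normc lam != 1 ->
       riesz_vector ip US (psi1 + lam *: psi2)) /\
  (forall psi1 psi2 : H,
     riesz_vector ip US psi1 -> riesz_vector ip US psi2 ->
     exists a b : R, 0 < a /\ a < b /\
       forall lam : R[i], Normc.normc lam < a \/ b < Normc.normc lam ->
         riesz_vector ip US (psi1 + lam *: psi2)).
Proof.
have [hip hcomp] := hH.
have swap : forall psi1 psi2 (lam : R[i]), lam != 0 ->
    riesz_vector ip US (psi2 + lam^-1 *: psi1) -> riesz_vector ip US (psi1 + lam *: psi2).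
  move=> psi1 psi2 lam l0 h.
  have := riesz_scale hip hUS l0 h.
  by rewrite scalerDr scalerA mulfV // scale1r addrC.
split.
  move=> psi1 psi2 w1 w2 lam hl.
  have [lt1|gt1] := ltP (Normc.normc lam) 1.
    exact: part1_small.
  have gt1' : 1 < Normc.normc lam by rewrite lt_neqAle eq_sym hl gt1.
  have l0 : lam != 0.
    apply: contraTneq gt1' => ->; by rewrite Normc.normc0 ltr10.
  apply: swap l0 _; apply: part1_small => //.
  by rewrite Normc.normcV invf_lt1 // (lt_trans ltr01 gt1').
move=> psi1 psi2 r1 r2.
have [c1 [c10 h1]] := part2_aux hip hcomp hUS r1 r2.
have [c2 [c20 h2]] := part2_aux hip hcomp hUS r2 r1.
exists c1^-1, (c2 + c1^-1); split; first by rewrite invr_gt0.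
split; first by rewrite ltrDr.
move=> lam [hl|hl].
  by apply: h1; rewrite -ltr_pdivlMr // mul1r.
have c2l : c2 < Normc.normc lam.
  by apply: lt_trans hl; rewrite ltrDl invr_gt0.
have l0 : lam != 0.
  apply: contraTneq c2l => ->; by rewrite Normc.normc0 ltNge ltW.
apply: swap l0 _; apply: h2.
by rewrite Normc.normcV mulrC ltr_pdivrMr ?mul1r // (lt_trans c20 c2l).
Qed.
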